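(* Let $L$ be a non-trivial pseudocomplemented de Morgan algebra with dual $pm$-space $P$. Then $L\in\mathbf{M}_0$ if and only if, for every order component $Q$ of $P$, the subset $Q\cup\zeta(Q)$, with the induced order and $\zeta$, is isomorphic to one of $Q_0,Q_1,Q_2$.
   Context: $\mathbf{M}_0$ is the variety of regular $pm$-algebras of range $0$, i.e. pseudocomplemented de Morgan algebras $(L;\wedge,\vee,{}^\ast,{}^\prime,0,1)$ satisfying $x\wedge x^{\prime\ast\prime}\le y\vee y^\ast$ and $x\wedge x^{\prime\ast}=(x\wedge x^{\prime\ast})^{\prime\ast}$. The dual $pm$-space is the Priestley space $(P;\tau,\le)$ of prime ideals with involution $\zeta(I)=\{a:a'\notin I\}$. An order component is a maximal subset of $P$ connected in the comparability graph of $(P;\le)$. The ordered sets with involution: $Q_0$ is a single point $x$ with $\zeta(x)=x$; $Q_1$ consists of two incomparable points $x,\zeta(x)$ interchanged by $\zeta$; $Q_2$ is a two-element chain $x<\zeta(x)$ with $\zeta$ interchanging them. *)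

(* Defs.v *)
From HB Require Import structures.
From mathcomp Require Import all_boot all_order.
Set Implicit Arguments. Unset Strict Implicit. Unset Printing Implicit Defensive.
Import Order.TTheory.
Local Open Scope order_scope.

Section PM.
Context {disp : Order.disp_t} {L : tbDistrLatticeType disp}.

Definition is_pm_algebra (neg star : L -> L) : Prop :=
  (forall x : L, neg (neg x) = x) /\
  (forall x y : L, neg (x `|` y) = neg x `&` neg y) /\
  (forall x y : L, (x `&` y == \bot) = (y <= star x)).

Definition in_M0 (neg star : L -> L) : Prop :=
  (forall x y : L, x `&` neg (star (neg x)) <= y `|` star y) /\
  (forall x : L, x `&` star (neg x) = star (neg (x `&` star (neg x)))).

Definition subset (I J : L -> Prop) : Prop := forall a, I a -> J a.

Definition prime_ideal (I : L -> Prop) : Prop :=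
  (exists a, I a) /\
  (forall a b, I b -> a <= b -> I a) /\
  (forall a b, I a -> I b -> I (a `|` b)) /\
  ~ I \top /\
  (forall a b, I (a `&` b) -> I a \/ I b).

Definition zeta (neg : L -> L) (I : L -> Prop) : L -> Prop :=
  fun a => ~ I (neg a).

Definition comparable (I J : L -> Prop) : Prop := subset I J \/ subset J I.

Inductive conn_in (Q : (L -> Prop) -> Prop) (I : L -> Prop) : (L -> Prop) -> Prop :=
  | conn_refl : Q I -> conn_in Q I I
  | conn_step : forall K J, conn_in Q I K -> Q J -> comparable K J -> conn_in Q I J.

Definition connected_subset (Q : (L -> Prop) -> Prop) : Prop :=
  forall I J, Q I -> Q J -> conn_in Q I J.

Definition order_component (Q : (L -> Prop) -> Prop) : Prop :=
  (forall I, Q I -> prime_ideal I) /\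
  (exists I, Q I) /\
  connected_subset Q /\
  (forall Q' : (L -> Prop) -> Prop,
      (forall I, Q' I -> prime_ideal I) ->
      (forall I, Q I -> Q' I) -> connected_subset Q' ->
      forall I, Q' I -> Q I).

Definition Q_union_zetaQ (neg : L -> L) (Q : (L -> Prop) -> Prop) (I : L -> Prop) : Prop :=
  Q I \/ exists J, Q J /\ I = zeta neg J.

Definition iso_to (neg : L -> L) (S : (L -> Prop) -> Prop)
  (T : Type) (leT : T -> T -> Prop) (invT : T -> T) : Prop :=
  exists f : T -> (L -> Prop),
    (forall t, S (f t)) /\
    (forall t t', f t = f t' -> t = t') /\
    (forall I, S I -> exists t, I = f t) /\
    (forall t t', subset (f t) (f t') <-> leT t t') /\
    (forall t, zeta neg (f t) = f (invT t)).

End PM.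

Definition Q0_le (x y : unit) : Prop := True.
Definition Q0_inv (x : unit) : unit := x.
Definition Q1_le (x y : bool) : Prop := x = y.
Definition Q1_inv (x : bool) : bool := negb x.
Definition Q2_le (x y : bool) : Prop := implb x y.
Definition Q2_inv (x : bool) : bool := negb x.

(* Main.v *)
Require Import Defs.
From HB Require Import structures.
From mathcomp Require Import all_boot all_order.
From mathcomp Require classical_sets.
From Stdlib Require Import Classical FunctionalExtensionality PropExtensionality.
Set Implicit Arguments. Unset Strict Implicit. Unset Printing Implicit Defensive.
Import Order.TTheory.
Local Open Scope order_scope.

Section PITsec.
Context {disp : Order.disp_t} {L : tbDistrLatticeType disp}.

Lemma PIT (d : L) (F : L -> Prop) :
  (exists f, F f) -> (forall f g, F f -> F g -> F (f `&` g)) ->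
  (forall f, F f -> ~ f <= d) ->
  exists I, prime_ideal I /\ I d /\ forall f, F f -> ~ I f.
Proof.
move=> [f0 Ff0] Fmeet Fd.
pose P (X : L -> Prop) := (forall a b, X b -> a <= b -> X a) /\
  (forall a b, X a -> X b -> X (a `|` b)) /\ (forall f, F f -> ~ X f) /\
  (forall z, X z -> X d).
have chain : forall G : classical_sets.set (classical_sets.set L),
   classical_sets.subset G P ->
   classical_sets.total_on G classical_sets.subset ->
   P (classical_sets.bigcup G id).
  move=> G GP Gtot; rewrite /P /classical_sets.bigcup /=; split; [|split; [|split]].
  - move=> a b [X GX Xb] ab; exists X => //; exact: (proj1 (GP _ GX)) _ _ Xb ab.
  - move=> a b [X GX Xa] [Y GY Yb].
    case: (Gtot _ _ GX GY) => [XY|YX].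
    + exists Y => //; apply: (proj1 (proj2 (GP _ GY))) => //; exact: XY.
    + exists X => //; apply: (proj1 (proj2 (GP _ GX))) => //; exact: YX.
  - move=> f Ff [X GX Xf]; exact: (proj1 (proj2 (proj2 (GP _ GX)))) _ Ff Xf.
  - move=> z [X GX Xz]; exists X => //; exact: (proj2 (proj2 (proj2 (GP _ GX)))) _ Xz.
have [A [[Adown [Ajoin [Adis Ad]]] Amax]] := classical_sets.Zorn_bigcup chain.
have Add : A d.
  apply: NNPP => nAd.
  apply: (Amax (fun z => z <= d)).
  - split; first by move=> z /Ad.
    by move=> H; apply: nAd; apply: H.
  - split; [|split; [|split]].
    + by move=> a b bd ab; exact: le_trans ab bd.
    + by move=> a b ad bd; rewrite leUx ad bd.
    + by move=> f Ff fd; exact: Fd Ff fd.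
    + by move=> _ _.
exists A; split; last by split.
split; first by exists d.
split; first exact Adown.
split; first exact Ajoin.
split; first by move=> At; apply: (Adis _ Ff0); apply: Adown At _; exact: lex1.
move=> a b Aab; apply: NNPP => Hn; have [nAa nAb] := not_or_and _ _ Hn.
have ext : forall c, ~ A c -> exists f, F f /\ exists i, A i /\ f <= i `|` c.
  move=> c nAc; apply: NNPP => Hno.
  apply: (Amax (fun z => exists i, A i /\ z <= i `|` c)).
  - split; first by move=> z Az; exists z; split => //; exact: leUl.
    move=> H; apply: nAc; apply: H; exists d; split => //; exact: leUr.
  - split; [|split; [|split]].
    + move=> x y [i [Ai yi]] xy; exists i; split => //; exact: le_trans xy yi.
    + move=> x y [i [Ai xi]] [j [Aj yj]]; exists (i `|` j); split; first exact (Ajoin _ _ Ai Aj).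
      rewrite leUx; apply/andP; split.
      * apply: le_trans xi _; apply: leU2 => //; exact: leUl.
      * apply: le_trans yj _; apply: leU2 => //; exact: leUr.
    + by move=> f Ff Xf; apply: Hno; exists f; split.
    + by move=> z _; exists d; split => //; exact: leUl.
have [f1 [Ff1 [i1 [Ai1 h1]]]] := ext _ nAa.
have [f2 [Ff2 [i2 [Ai2 h2]]]] := ext _ nAb.
apply: (Adis _ (Fmeet _ _ Ff1 Ff2)).
apply: (Adown _ ((i1 `|` i2) `|` (a `&` b))); first by apply Ajoin => //; apply Ajoin.
rewrite joinIr; apply: leI2.
- apply: le_trans h1 _; apply: leU2 => //; exact: leUl.
- apply: le_trans h2 _; apply: leU2 => //; exact: leUr.
Qed.

End PITsec.

Section Main.
Context {disp : Order.disp_t} {L : tbDistrLatticeType disp}.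
Variables (neg star : L -> L).
Hypothesis HL : is_pm_algebra neg star.
Implicit Types (I J K N : L -> Prop) (a b c x y : L).

Lemma negK x : neg (neg x) = x. Proof. by case: HL. Qed.
Lemma negU x y : neg (x `|` y) = neg x `&` neg y. Proof. by case: HL => _ []. Qed.
Lemma star_spec x y : (x `&` y == \bot) = (y <= star x). Proof. by case: HL => _ []. Qed.

Lemma neg_anti x y : x <= y -> neg y <= neg x.
Proof. by move/join_idPr => <-; rewrite negU; exact: leIl. Qed.

Lemma negI x y : neg (x `&` y) = neg x `|` neg y.
Proof. by rewrite -{1}(negK x) -{1}(negK y) -negU negK. Qed.

Lemma meet_star x : x `&` star x = \bot.
Proof. by apply/eqP; rewrite star_spec. Qed.

Lemma ext_eq (A B : L -> Prop) : (forall a, A a <-> B a) -> A = B.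
Proof.
move=> h; apply: functional_extensionality => a.
by apply: propositional_extensionality.
Qed.

Lemma sub_anti (A B : L -> Prop) : Defs.subset A B -> Defs.subset B A -> A = B.
Proof. by move=> h1 h2; apply: ext_eq => a; split; [apply: h1|apply: h2]. Qed.

Section Prime.
Variable I : L -> Prop.
Hypothesis HI : prime_ideal I.
Lemma pr_down a b : I b -> a <= b -> I a. Proof. by case: HI => _ [h _]; apply: h. Qed.
Lemma pr_join a b : I a -> I b -> I (a `|` b). Proof. by case: HI => _ [_ [h _]]; apply: h. Qed.
Lemma pr_ntop : ~ I \top. Proof. by case: HI => _ [_ [_ [h _]]]. Qed.
Lemma pr_meet a b : I (a `&` b) -> I a \/ I b. Proof. by case: HI => _ [_ [_ [_ h]]]; apply: h. Qed.
Lemma pr_bot : I \bot.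
Proof. by case: HI => [[a Ia] _]; apply: pr_down Ia _; exact: le0x. Qed.
Lemma pr_star x : ~ I x -> I (star x).
Proof.
move=> nIx; have := pr_bot; rewrite -(meet_star x) => /pr_meet [//|//].
Qed.
Lemma pr_star' x : I (star x) \/ I x.
Proof. by case: (classic (I x)) => h; [right|left; apply: pr_star]. Qed.
End Prime.

Lemma neg0 : neg \bot = \top.
Proof.
apply: le_anti; rewrite lex1 /=.
by rewrite -{1}(negK \top); apply: neg_anti; exact: le0x.
Qed.
Lemma neg1 : neg \top = \bot.
Proof. by rewrite -neg0 negK. Qed.

Lemma zeta_prime I : prime_ideal I -> prime_ideal (zeta neg I).
Proof.
move=> HI; rewrite /zeta; split; first by exists \bot; rewrite neg0; exact: pr_ntop.
split; first by move=> a b nb ab Ia; apply: nb; apply: pr_down Ia _ => //; exact: neg_anti.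
split; first by move=> a b na nb; rewrite negU => /(pr_meet HI) [].
split; first by rewrite neg1 => h; apply: h; exact: pr_bot.
move=> a b; rewrite negI => h; apply: NNPP => /not_or_and [/NNPP ha /NNPP hb].
by apply: h; apply: pr_join.
Qed.

Lemma zetaK I : zeta neg (zeta neg I) = I.
Proof.
apply: ext_eq => a; rewrite /zeta negK; split; [exact: NNPP | by move=> h; apply].
Qed.

Lemma zeta_anti I J : Defs.subset I J -> Defs.subset (zeta neg J) (zeta neg I).
Proof. by move=> h a nJ Ia; apply: nJ; apply: h. Qed.

Lemma zetaE I a : zeta neg I a = ~ I (neg a). Proof. by []. Qed.

Lemma star_PIT J c : prime_ideal J -> J (star c) ->
  exists N, prime_ideal N /\ Defs.subset N J /\ ~ N c.
Proof.
move=> HJ Jc.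
have [|||N [HN [_ Ndis]]] := @PIT _ L \bot (fun z => exists j, ~ J j /\ c `&` j <= z).
- by exists (c `&` \top), \top; split => //; exact: pr_ntop.
- move=> f g [j1 [nj1 h1]] [j2 [nj2 h2]]; exists (j1 `&` j2); split.
    by move/(pr_meet HJ) => [].
  apply: le_trans (leI2 h1 h2); rewrite lexI; apply/andP; split; apply: leI2 => //.
    exact: leIl.
  exact: leIr.
- move=> f [j [nj h]] fb; apply: nj; apply: pr_down Jc _ => //.
  rewrite -star_spec eq_le le0x andbT; exact: le_trans h fb.
exists N; split => //; split.
- move=> a Na; apply: NNPP => nJa; apply: (Ndis (c `&` a)).
    by exists a; split.
  by apply: pr_down Na _ => //; exact: leIr.
- move=> Nc; apply: (Ndis c); last exact Nc.
  by exists \top; split; [exact: pr_ntop | exact: leIl].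
Qed.

Lemma sep (a b : L) : ~ (a <= b) -> exists I, prime_ideal I /\ I b /\ ~ I a.
Proof.
move=> nab.
have [|||I [HI [Ib Idis]]] := @PIT _ L b (fun z => a <= z).
- by exists a.
- by move=> f g af ag; rewrite lexI af ag.
- by move=> f af fb; apply: nab; exact: le_trans af fb.
by exists I; split => //; split => //; apply: Idis.
Qed.

Lemma plus_PIT I x : prime_ideal I -> ~ I (neg (star (neg x))) ->
  exists K, prime_ideal K /\ Defs.subset I K /\ K x.
Proof.
move=> HI nI.
have [N [HN [NzI nN]]] := star_PIT (zeta_prime HI) nI.
exists (zeta neg N); split; first exact: zeta_prime.
split; last by rewrite zetaE.
by move=> a Ia; rewrite zetaE => /NzI; rewrite zetaE negK.
Qed.


Section Forward.
Hypothesis HM : in_M0 neg star.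

Lemma no3 N J K x y : prime_ideal N -> prime_ideal J -> prime_ideal K ->
  Defs.subset N J -> Defs.subset J K -> ~ N y -> J y -> ~ J x -> K x -> False.
Proof.
move=> HN HJ HK NJ JK nNy Jy nJx Kx.
have Jsy : J (star y) by apply: NJ; apply: pr_star.
have Jj : J (y `|` star y) by apply: pr_join.
have : J (x `&` neg (star (neg x))) by apply: pr_down Jj _; case: HM.
case/(pr_meet HJ) => [//|/JK Kp].
have : zeta neg K (star (neg x)).
  apply: pr_star; first exact: zeta_prime.
  by rewrite zetaE negK.
by rewrite zetaE.
Qed.

Lemma keyhalf J K a : prime_ideal J -> prime_ideal K -> Defs.subset J K ->
  K a -> ~ J a -> forall x, K x -> zeta neg J x.
Proof.
move=> HJ HK JK Ka nJa.
have Jmin : forall N, prime_ideal N -> Defs.subset N J -> Defs.subset J N.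
  move=> N HN NJ y Jy; apply: NNPP => nNy.
  exact: (no3 HN HJ HK NJ JK nNy Jy nJa Ka).
have first : forall x, K x -> J x \/ zeta neg J x.
  move=> x Kx.
  have zK : zeta neg K (star (neg x)).
    by apply: pr_star; [exact: zeta_prime | rewrite zetaE negK].
  have zJ : zeta neg J (star (neg x)) by apply: (zeta_anti JK).
  set t := x `&` star (neg x).
  have zJt : zeta neg J t.
    apply: pr_down zJ _; [exact: zeta_prime | exact: leIr].
  have Jst : J (star (neg t)) by apply: pr_star.
  have Jt : J t by rewrite /t (proj2 HM x).
  case: (pr_meet HJ Jt) => [Jx|Jsx]; first by left.
  right; have [N [HN [NJ nN]]] := star_PIT HJ Jsx.
  by rewrite zetaE => Jn; apply: nN; apply: (Jmin N HN NJ).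
move=> x Kx; apply: NNPP => nzx.
have : K (a `|` x) by apply: pr_join.
case/first => [Jax|zax].
- by apply: nJa; apply: pr_down Jax _ => //; exact: leUl.
- apply: nzx; apply: pr_down zax _; [exact: zeta_prime | exact: leUr].
Qed.

Lemma key J K a : prime_ideal J -> prime_ideal K -> Defs.subset J K ->
  K a -> ~ J a -> K = zeta neg J.
Proof.
move=> HJ HK JK Ka nJa; apply: sub_anti.
  exact: keyhalf HJ HK JK Ka nJa.
have := @keyhalf (zeta neg K) (zeta neg J) (neg a) (zeta_prime HK) (zeta_prime HJ)
   (zeta_anti JK).
rewrite zetaK !zetaE negK; apply => //; by move=> h; apply: h.
Qed.

Lemma comp_cases J K : prime_ideal J -> prime_ideal K -> Defs.comparable J K ->
  K = J \/ K = zeta neg J.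
Proof.
have gen : forall J K, prime_ideal J -> prime_ideal K -> Defs.subset J K ->
    K = J \/ K = zeta neg J.
  move=> J' K' HJ HK JK.
  case: (classic (exists a, K' a /\ ~ J' a)) => [[a [Ka nJa]]|h].
    by right; apply: key HJ HK JK Ka nJa.
  left; apply: sub_anti => // a Ka; apply: NNPP => nJa; apply: h; by exists a.
move=> HJ HK [JK|KJ]; first exact: gen.
case: (gen K J HK HJ KJ) => ->; first by left.
by right; rewrite zetaK.
Qed.

Lemma conn_Q (Q : (L -> Prop) -> Prop) A B : conn_in Q A B -> Q B.
Proof. by case. Qed.

Lemma conn_cases (Q : (L -> Prop) -> Prop) A B :
  (forall I, Q I -> prime_ideal I) -> conn_in Q A B -> B = A \/ B = zeta neg A.
Proof.
move=> QP; elim => [QA|K J cAK IH QJ cKJ]; first by left.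
have HK := QP _ (conn_Q cAK).
case: (comp_cases HK (QP _ QJ) cKJ) => ->.
  by [].
case: IH => ->; first by right.
by left; rewrite zetaK.
Qed.

End Forward.

Lemma comparable_sym I J : Defs.comparable I J -> Defs.comparable J I.
Proof. by case; [right|left]. Qed.

Lemma conn_trans (Q : (L -> Prop) -> Prop) A B C :
  conn_in Q A B -> conn_in Q B C -> conn_in Q A C.
Proof.
move=> hAB; elim => [//|K J _ IH QJ cKJ].
exact: conn_step IH QJ cKJ.
Qed.

Lemma conn_sym (Q : (L -> Prop) -> Prop) A B : conn_in Q A B -> conn_in Q B A.
Proof.
elim => [QA|K J cAK IH QJ cKJ]; first exact: conn_refl.
apply: conn_trans IH.
exact: conn_step (conn_refl QJ) (conn_Q cAK) (comparable_sym cKJ).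
Qed.

Lemma conn_lift (Q : (L -> Prop) -> Prop) A B :
  conn_in Q A B -> conn_in (conn_in Q A) A B.
Proof.
elim => [QA|K J cAK IH QJ cKJ]; first by apply: conn_refl; apply: conn_refl.
exact: (conn_step IH (conn_step cAK QJ cKJ) cKJ).
Qed.

Lemma conn_mono (Q Q' : (L -> Prop) -> Prop) A B :
  (forall I, Q I -> Q' I) -> conn_in Q A B -> conn_in Q' A B.
Proof.
move=> QQ; elim => [QA|K J _ IH QJ cKJ]; first by apply: conn_refl; apply: QQ.
by apply: conn_step IH (QQ _ QJ) cKJ.
Qed.

Lemma comp_of_prime I : prime_ideal I ->
  order_component (conn_in prime_ideal I).
Proof.
move=> HI; split; first by move=> J /conn_Q.
split; first by exists I; apply: conn_refl.
split.
  move=> A B hA hB; apply: conn_trans (conn_sym (conn_lift hA)) (conn_lift hB).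
move=> Q' Q'P sub con J Q'J.
have := con I J (sub _ (conn_refl HI)) Q'J.
exact: conn_mono.
Qed.

Definition shapes (S : (L -> Prop) -> Prop) :=
  iso_to neg S Q0_le Q0_inv \/ iso_to neg S Q1_le Q1_inv \/
  iso_to neg S Q2_le Q2_inv.

Lemma shapes_F2 S : shapes S ->
  forall A B, S A -> S B -> B = A \/ B = zeta neg A.
Proof.
case=> [[f [_ [_ [surj _]]]]|[[f [_ [_ [surj [_ zf]]]]]|[f [_ [_ [surj [_ zf]]]]]]] A B SA SB.
- by have [[] ->] := surj _ SA; have [[] ->] := surj _ SB; left.
- have [t ->] := surj _ SA; have [t' ->] := surj _ SB.
  rewrite zf; case: t; case: t'; by [left|right].
- have [t ->] := surj _ SA; have [t' ->] := surj _ SB.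
  rewrite zf; case: t; case: t'; by [left|right].
Qed.

Section Backward.
Hypothesis HS : forall Q : (L -> Prop) -> Prop, order_component Q ->
  shapes (Q_union_zetaQ neg Q).

Lemma F2a I N : prime_ideal I -> prime_ideal N -> Defs.comparable I N ->
  N = I \/ N = zeta neg I.
Proof.
move=> HI HN cIN.
apply: (shapes_F2 (HS (comp_of_prime HI))); left; first exact: conn_refl.
exact: conn_step (conn_refl HI) HN cIN.
Qed.

Lemma F2b I N : prime_ideal I -> prime_ideal N -> Defs.subset N (zeta neg I) ->
  N = I \/ N = zeta neg I.
Proof.
move=> HI HN NzI.
apply: (shapes_F2 (HS (comp_of_prime HI))); first by left; exact: conn_refl.
right; exists (zeta neg N); split; last by rewrite zetaK.
apply: conn_step (conn_refl HI) (zeta_prime HN) _.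
by left; rewrite -(zetaK I); apply: zeta_anti.
Qed.

Lemma back1 x y : x `&` neg (star (neg x)) <= y `|` star y.
Proof.
apply: NNPP => /sep [I [HI [Iy nIx]]].
have Iy1 : I y by apply: pr_down Iy _ => //; exact: leUl.
have Iy2 : I (star y) by apply: pr_down Iy _ => //; exact: leUr.
have nx : ~ I x by move=> Ix; apply: nIx; apply: pr_down Ix _ => //; exact: leIl.
have np : ~ I (neg (star (neg x))).
  by move=> Ix; apply: nIx; apply: pr_down Ix _ => //; exact: leIr.
have [N [HN [NI nNy]]] := star_PIT HI Iy2.
have [K [HK [IK Kx]]] := plus_PIT HI np.
case: (F2a HI HN (or_intror NI)) => eN; first by apply: nNy; rewrite eN.
case: (F2a HI HK (or_introl IK)) => eK; first by apply: nx; rewrite -eK.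
by apply: nNy; rewrite eN -eK; apply: IK.
Qed.

Lemma G1 I x : prime_ideal I -> I (x `&` star (neg x)) ->
  I (star (neg (x `&` star (neg x)))).
Proof.
move=> HI It; case: (pr_meet HI It) => [Ix|Is].
- have zs : zeta neg I (star (neg x)).
    by apply: pr_star; [exact: zeta_prime | rewrite zetaE negK].
  have zt : zeta neg I (x `&` star (neg x)).
    by apply: pr_down zs _; [exact: zeta_prime | exact: leIr].
  exact: pr_star.
- have [N [HN [NI nN]]] := star_PIT HI Is.
  apply: NI; apply: pr_star => //.
  change (zeta neg N (x `&` star (neg x))).
  by apply: pr_down (_ : zeta neg N x) _; [exact: zeta_prime | | exact: leIl].
Qed.

Lemma G2 I x : prime_ideal I -> I (star (neg (x `&` star (neg x)))) ->
  I (x `&` star (neg x)).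
Proof.
move=> HI Is.
have Ist : I (star (neg x)) -> I (x `&` star (neg x)).
  by move=> h; apply: pr_down h _ => //; exact: leIr.
have Ix : I x -> I (x `&` star (neg x)).
  by move=> h; apply: pr_down h _ => //; exact: leIl.
have [N [HN [NI nN]]] := star_PIT HI Is.
case: (F2a HI HN (or_intror NI)) => eN; last first.
  by move: nN; rewrite eN zetaE negK => /NNPP.
subst N.
have zt : zeta neg I (x `&` star (neg x)) by [].
case: (pr_meet (zeta_prime HI) zt) => [zx|zs].
  by apply: Ist; apply: pr_star.
have [N2 [HN2 [N2I nN2]]] := star_PIT (zeta_prime HI) zs.
case: (F2b HI HN2 N2I) => eN2; subst N2.
  by apply: Ist; apply: pr_star.
by apply: Ix; move: nN2; rewrite zetaE negK => /NNPP.
Qed.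

Lemma back2 x : x `&` star (neg x) = star (neg (x `&` star (neg x))).
Proof.
apply: le_anti; apply/andP; split.
- apply: NNPP => /sep [I [HI [Ib nIa]]]; apply: nIa; exact: G2.
- apply: NNPP => /sep [I [HI [Ib nIa]]]; apply: nIa; exact: G1.
Qed.

End Backward.
End Main.

Section Iso.
Context {disp : Order.disp_t} {L : tbDistrLatticeType disp}.
Variables (neg : L -> L) (S : (L -> Prop) -> Prop) (A B : L -> Prop).
Hypotheses (SA : S A) (SB : S B) (Sall : forall C, S C -> C = A \/ C = B)
  (zA : zeta neg A = B) (zB : zeta neg B = A) (nAB : A <> B).

Lemma iso_Q2 : Defs.subset A B -> ~ Defs.subset B A -> iso_to neg S Q2_le Q2_inv.
Proof.
move=> AB nBA; exists (fun b : bool => if b then B else A).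
split; first by case.
split; first by case; case => //= h; case: nAB; first [exact h | exact (esym h)].
split; first by move=> C /Sall [->|->]; [exists false|exists true].
split; first by case; case => /=; split => // _ a.
by case.
Qed.

Lemma iso_Q1 : ~ Defs.subset A B -> ~ Defs.subset B A -> iso_to neg S Q1_le Q1_inv.
Proof.
move=> nAB' nBA; exists (fun b : bool => if b then B else A).
split; first by case.
split; first by case; case => //= h; case: nAB; first [exact h | exact (esym h)].
split; first by move=> C /Sall [->|->]; [exists false|exists true].
split; first by case; case => /=; split => // _ a.
by case.
Qed.
End Iso.

Theorem theorem4p4 (disp : Order.disp_t) (L : tbDistrLatticeType disp)
  (neg star : L -> L) (HL : is_pm_algebra neg star)
  (Hnontriv : (\bot : L) != \top) :
  in_M0 neg star <->
  (forall Q : (L -> Prop) -> Prop, order_component Q ->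
     iso_to neg (Q_union_zetaQ neg Q) Q0_le Q0_inv \/
     iso_to neg (Q_union_zetaQ neg Q) Q1_le Q1_inv \/
     iso_to neg (Q_union_zetaQ neg Q) Q2_le Q2_inv).
Proof.
split.
- move=> HM Q [QP [[I0 QI0] [con _]]].
  have zz := zetaK HL I0.
  have Sall : forall B, Q_union_zetaQ neg Q B -> B = I0 \/ B = zeta neg I0.
    move=> B [QB|[J [QJ ->]]].
      exact: (conn_cases HL HM QP (con _ _ QI0 QB)).
    case: (conn_cases HL HM QP (con _ _ QI0 QJ)) => ->; first by right.
    by left.
  have S0 : Q_union_zetaQ neg Q I0 by left.
  have S1 : Q_union_zetaQ neg Q (zeta neg I0) by right; exists I0.
  case: (classic (zeta neg I0 = I0)) => [e|ne].
    left; exists (fun _ => I0); split => //; split; first by case; case.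
    split; first by move=> I /Sall [->|->]; exists tt.
    split => //; by move=> t t'; split => // _ a.
  have ne' : I0 <> zeta neg I0 by move=> h; apply: ne; rewrite -h.
  have Sall' : forall C, Q_union_zetaQ neg Q C -> C = zeta neg I0 \/ C = I0.
    by move=> C /Sall [];[right|left].
  right; case: (classic (Defs.subset I0 (zeta neg I0))) => [s1|ns1].
    right; apply: (iso_Q2 S0 S1 Sall (erefl _) zz ne' s1).
    by move=> s2; apply: ne; apply: sub_anti.
  case: (classic (Defs.subset (zeta neg I0) I0)) => [s2|ns2].
    right; exact: (iso_Q2 S1 S0 Sall' zz (erefl _) ne s2 ns1).
  left; exact: (iso_Q1 S0 S1 Sall (erefl _) zz ne' ns1 ns2).
- move=> HS; split.
  + by move=> x y; apply: (back1 HL HS).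
  + by move=> x; apply: (back2 HL HS).
Qed.
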